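(* Let $\mathbf{C}=\mathbf{C}_1\,\dot\cup\,\mathbf{C}_2$ and $\mathbf{B}\in\dot{\mathbb{P}}(\mathbb{L}(\mathbf{C}_1))$ with $|\mathbf{B}|=|\mathbf{C}_1|$. Suppose every variable $X\in\mathbf{C}_2$ has a positive monotonic effect on $D$ relative to $\mathbf{C}$. If for some $\omega^*\in\Omega$ (i) $D_{\mathbf{B}=\mathbf{1},\mathbf{C}_2=\mathbf{0}}(\omega^* )=1$ and (ii) for all $L\in\mathbf{B}$, $D_{\mathbf{B}\setminus\{L\}=\mathbf{1},L=0,\mathbf{C}_2=\mathbf{0}}(\omega^* )=0$, then $\mathbf{B}$ is a minimal sufficient cause for $D$ relative to $\mathbf{C}$ for $\omega^*$.
   Context: Events are binary random variables on a population $\Omega$; $\overline{X}=1-X$; $\mathbb{L}(\mathbf{C})=\mathbf{C}\cup\{\overline{X}:X\in\mathbf{C}\}$; $\dot{\mathbb{P}}(\mathbb{L}(\mathbf{C}))$ is the set of subsets of $\mathbb{L}(\mathbf{C})$ not containing both $X$ and $\overline{X}$; $(L)_{\mathbf{c}}$ is the value of literal $L$ under assignment $\mathbf{c}$; $\bigwedge(\mathbf{B})=\min_{L\in\mathbf{B}}L$. Potential outcomes $D_{\mathbf{c}}(\omega)\in\{0,1\}$. Since $|\mathbf{B}|=|\mathbf{C}_1|$, setting literals of $\mathbf{B}$ determines an assignment to $\mathbf{C}_1$. A variable $X\in\mathbf{C}$ has a positive monotonic effect on $D$ relative to $\mathbf{C}$ if for all $\omega$ and all values of the other variables of $\mathbf{C}$,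 the potential outcome with $X=1$ is at least that with $X=0$. $\mathbf{B}\subseteq\mathbb{L}(\mathbf{C})$ is a sufficient cause for $D$ relative to $\mathbf{C}$ for $\omega^*$ if some $\mathbf{c}^*$ has $(\bigwedge(\mathbf{B}))_{\mathbf{c}^*}=1$ and $D_{\mathbf{c}}(\omega^* )=1$ for every $\mathbf{c}$ with $(\bigwedge(\mathbf{B}))_{\mathbf{c}}=1$; it is minimal if no proper subset of $\mathbf{B}$ is a sufficient cause for $D$ relative to $\mathbf{C}$ for $\omega^*$. *)

(* Defs.v *)
From mathcomp Require Import all_boot.
Set Implicit Arguments. Unset Strict Implicit. Unset Printing Implicit Defensive.

(* Variables form a finite type V (the set C = all of V).
   A literal is a pair (X, b) : V * bool; (X, true) stands for X and
   (X, false) for its complement 1 - X.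
   Potential outcomes: D w c = D_c(w). *)

Definition lit_val (V : finType) (L : V * bool) (c : {ffun V -> bool}) : bool :=
  c L.1 == L.2.

(* (/\ B)_c = 1 : every literal in B takes value 1 under c (min over empty set is 1). *)
Definition conj_true (V : finType) (B : {set V * bool}) (c : {ffun V -> bool}) : Prop :=
  forall L, L \in B -> lit_val L c.

Definition consistent (V : finType) (B : {set V * bool}) : Prop :=
  forall X : V, ~ ((X, true) \in B /\ (X, false) \in B).

Definition lits_over (V : finType) (C1 : {set V}) (B : {set V * bool}) : Prop :=
  forall L, L \in B -> L.1 \in C1.

Definition neg_lit (V : finType) (L : V * bool) : V * bool := (L.1, ~~ L.2).

Definition pos_monotonic (V : finType) (Omega : Type)
  (D : Omega -> {ffun V -> bool} -> bool) (X : V) : Prop :=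
  forall (w : Omega) (c : {ffun V -> bool}),
    D w [ffun Y => if Y == X then false else c Y] <=
    D w [ffun Y => if Y == X then true else c Y].

Definition sufficient_cause (V : finType) (Omega : Type)
  (D : Omega -> {ffun V -> bool} -> bool) (w : Omega) (B : {set V * bool}) : Prop :=
  (exists c, conj_true B c) /\
  (forall c, conj_true B c -> D w c = true).

Definition minimal_sufficient_cause (V : finType) (Omega : Type)
  (D : Omega -> {ffun V -> bool} -> bool) (w : Omega) (B : {set V * bool}) : Prop :=
  sufficient_cause D w B /\
  (forall B' : {set V * bool}, B' \proper B -> ~ sufficient_cause D w B').

(* Main.v *)
Require Import Defs.
From mathcomp Require Import all_boot.

Lemma cons_eq (V : finType) (B : {set V * bool}) L L' :
  consistent B -> L \in B -> L' \in B -> L.1 = L'.1 -> L = L'.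
Proof.
case: L => x b; case: L' => x' b' /= Hc HL HL' E; subst x'.
case: b HL; case: b' HL' => // HL' HL; exfalso; apply: (Hc x); tauto.
Qed.

Lemma disj (V : finType) (C1 C2 : {set V}) X :
  C1 :&: C2 = set0 -> X \in C1 -> X \in C2 -> False.
Proof.
move=> H h1 h2; have: X \in C1 :&: C2 by rewrite inE h1 h2.
by rewrite H inE.
Qed.

Theorem mainTheorem9 (V : finType) (Omega : Type)
  (D : Omega -> {ffun V -> bool} -> bool)
  (C1 C2 : {set V}) (B : {set V * bool}) (w : Omega) :
  C1 :&: C2 = set0 ->
  C1 :|: C2 = [set: V] ->
  lits_over C1 B ->
  consistent B ->
  #|B| = #|C1| ->
  (forall X, X \in C2 -> pos_monotonic D X) ->
  (* (i) D_{B=1, C2=0}(w) = 1 *)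
  (forall c : {ffun V -> bool},
     conj_true B c -> (forall X, X \in C2 -> c X = false) -> D w c = true) ->
  (* (ii) for all L in B, D_{B\{L}=1, L=0, C2=0}(w) = 0 *)
  (forall L, L \in B -> forall c : {ffun V -> bool},
     conj_true (B :\ L) c -> lit_val (neg_lit L) c ->
     (forall X, X \in C2 -> c X = false) -> D w c = false) ->
  minimal_sufficient_cause D w B.
Proof.
move=> Hdis _ Hov Hc _ Hmon Hi Hii.
pose c0 := [ffun X => if [pick L in B | L.1 == X] is Some L then L.2 else false].
have Hc0 : conj_true B c0.
  move=> L HL; rewrite /lit_val ffunE.
  case: pickP => [L' /andP [HL' /eqP E]|/(_ L)]; last by rewrite HL eqxx.
  by rewrite (@cons_eq _ B _ _ Hc HL' HL E).
have Hsuff : forall c, conj_true B c -> D w c = true.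
  move=> c; move Hn: #|[set X in C2 | c X]| => n.
  elim: n c Hn => [|n IH] c Hn Hct.
    apply: Hi => // X HX; apply/negbTE/negP => cX.
    have : X \in [set X in C2 | c X] by rewrite inE HX cX.
    have /eqP -> : [set X in C2 | c X] == set0 by rewrite -cards_eq0 Hn.
    by rewrite in_set0.
  have : (0 < #|[set X in C2 | c X]|) by rewrite Hn.
  rewrite card_gt0 => /set0Pn [X]; rewrite inE => /andP [HX cX].
  set c' := [ffun Y => if Y == X then false else c Y].
  have Hc' : conj_true B c'.
    move=> L HL; rewrite /lit_val ffunE; case: (L.1 =P X) => [E|_]; last exact: (Hct L HL).
    by exfalso; apply: (@disj _ C1 C2 _ Hdis (Hov _ HL)); rewrite E.
  have Dc' : D w c' = true.
    apply: IH Hc'; apply/eqP; rewrite -eqSS -Hn.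
    rewrite (cardsD1 X [set X in C2 | c X]) inE HX cX /=; apply/eqP; congr (_.+1).
    apply: eq_card => Y; rewrite !inE ffunE; case: (Y =P X) => [->|_]; by rewrite ?eqxx ?andbF.
  have := Hmon X HX w c; rewrite Dc'.
  have -> : [ffun Y => if Y == X then true else c Y] = c.
    by apply/ffunP => Y; rewrite ffunE; case: eqP => // ->.
  by case: (D w c).
split; first by split; [exists c0|].
move=> B' /properP [Hsub [L HL HL']] [_ HB'].
set c := [ffun X => if X == L.1 then ~~ L.2 else if X \in C2 then false else c0 X].
have Hcc : conj_true (B :\ L) c.
  move=> L0; rewrite !inE => /andP [ne0 HL0]; rewrite /lit_val ffunE.
  case: (L0.1 =P L.1) => [E|_].
    by move: ne0; rewrite (@cons_eq _ B _ _ Hc HL0 HL E) eqxx.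
  case: ifP => [H2|_]; last exact: (Hc0 L0 HL0).
  by exfalso; apply: (@disj _ C1 C2 _ Hdis (Hov _ HL0)).
have : D w c = false.
  apply: (Hii L HL c Hcc).
  - by rewrite /lit_val /neg_lit ffunE eqxx.
  - move=> X HX; rewrite ffunE HX; case: (X =P L.1) => // E.
    by exfalso; apply: (@disj _ C1 C2 _ Hdis (Hov _ HL)); rewrite -E.
rewrite HB' // => L' HL'B'.
have HL'B := subsetP Hsub _ HL'B'.
have ne : L' != L by apply/eqP => E; move: HL'; rewrite -E HL'B'.
by apply: Hcc; rewrite !inE ne HL'B.
Qed.
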